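(* Let $q$ be a prime power, $n,k,m$ positive integers, and let $\mathcal C_1,\mathcal C_2$ be two $[n,k,n-k+1]_{q^m/q}$ MRD codes. Then $\mathcal C_1\oplus\mathcal C_2=\{(u\mid v): u\in\mathcal C_1,v\in\mathcal C_2\}\subseteq\mathbb F_{q^m}^{2n}$ is a $[2n,2k]_{q^m/q}$ code whose generalized rank weights are $$d_i(\mathcal C_1\oplus\mathcal C_2)=\begin{cases} n-k+i & \text{if } 1\le i\le k,\\ 2n-2k+i & \text{if } k+1\le i\le 2k.\end{cases}$$
   Context: An $[n,k,d]_{q^m/q}$ code is a $k$-dimensional $\mathbb F_{q^m}$-subspace of $\mathbb F_{q^m}^n$ with minimum rank distance $d$, where the rank weight of $v=(v_1,\ldots,v_n)$ is $\dim_{\mathbb F_q}\langle v_1,\ldots,v_n\rangle_{\mathbb F_q}$ and $d$ is the minimum rank weight of a nonzero codeword. It is MRD if $mk=\min\{m(n-d+1),n(m-d+1)\}$. An $\mathbb F_{q^m}$-subspace $\mathcal A\subseteq\mathbb F_{q^m}^N$ is Galois closed if it is invariant under the coordinatewise $q$-Frobenius map; the $j$-th generalized rank weight of a code $\mathcal C\subseteq\mathbb F_{q^m}^N$ is $d_j(\mathcal C)=\min\{\dim_{\mathbb F_{q^m}}\mathcal A:\mathcal A\text{ Galois closed},\ \dim_{\mathbb F_{q^m}}(\mathcal A\cap\mathcal C)\ge j\}$. *)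

(* Defs.v *)
From HB Require Import structures.
From mathcomp Require Import all_boot all_order all_algebra all_field.
Set Implicit Arguments. Unset Strict Implicit. Unset Printing Implicit Defensive.
Import GRing.Theory.
Local Open Scope ring_scope.

(* Convention: F_q is a finite field K (so q := #|K| is a prime power),
   F_{q^m} is a field extension L of K with \dim_K L = m. *)

Section Codes.
Variables (K : finFieldType) (L : fieldExtType K).

(* rank weight: K-dimension of the K-span of the entries of v *)
Definition rank_weight (n : nat) (v : 'rV[L]_n) : nat :=
  \dim (<< [seq v ord0 i | i <- enum 'I_n] >>)%VS.

Definition min_rank_distance (n : nat) (C : {vspace 'rV[L]_n}) (d : nat) : Prop :=
  (exists2 c, c \in C & c != 0 /\ rank_weight c = d) /\
  (forall c, c \in C -> c != 0 -> (d <= rank_weight c)%N).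

Definition is_code (n k d : nat) (C : {vspace 'rV[L]_n}) : Prop :=
  \dim C = k /\ min_rank_distance C d.

Definition is_MRD (m n k d : nat) (C : {vspace 'rV[L]_n}) : Prop :=
  is_code k d C /\ (m * k = minn (m * (n - d + 1)) (n * (m - d + 1)))%N.

Definition frob_vec (N : nat) (v : 'rV[L]_N) : 'rV[L]_N :=
  map_mx (fun x : L => x ^+ #|K|) v.

Definition galois_closed (N : nat) (A : {vspace 'rV[L]_N}) : Prop :=
  forall v, v \in A -> frob_vec v \in A.

Definition is_gen_rank_weight (N : nat) (C : {vspace 'rV[L]_N}) (j d : nat) : Prop :=
  (exists A : {vspace 'rV[L]_N},
      [/\ galois_closed A, (j <= \dim (A :&: C))%N & \dim A = d]) /\
  (forall A : {vspace 'rV[L]_N},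
      galois_closed A -> (j <= \dim (A :&: C))%N -> (d <= \dim A)%N).

Definition code_dsum (n : nat) (C1 C2 : {vspace 'rV[L]_n}) : {vspace 'rV[L]_(n + n)} :=
  (linfun (fun u : 'rV[L]_n => row_mx u (0 : 'rV[L]_n)) @: C1 +
   linfun (fun v : 'rV[L]_n => row_mx (0 : 'rV[L]_n) v) @: C2)%VS.

End Codes.

Arguments is_MRD {K L} m n k d C.

(* Main.v *)
Require Import Defs.
From HB Require Import structures.
From mathcomp Require Import all_boot all_order all_algebra all_field.
From mathcomp Require Import zify.
Import GRing.Theory.
Section S.
Set Implicit Arguments. Unset Strict Implicit. Unset Printing Implicit Defensive.
Local Open Scope ring_scope.
Variables (K : finFieldType) (L : fieldExtType K).
Local Notation q := #|K|.

Lemma q_gt1 : (1 < q)%N. Proof. exact: card_finNzRing_gt1. Qed.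

Lemma fixK (x : L) : x ^+ q = x -> exists a : K, x = a%:A.
Proof.
move=> xq.
case: (boolP [exists a : K, x == a%:A]) => [/existsP[a /eqP->]|nx]; first by exists a.
exfalso.
pose p : {poly L} := 'X^q - 'X.
have sp : size p = q.+1.
  rewrite /p size_addl ?size_polyXn // size_opp size_polyX; exact: q_gt1.
have p0 : p != 0 by rewrite -size_poly_eq0 sp.
set rs := x :: [seq a%:A | a <- enum K].
have r1 : all (root p) rs.
  rewrite /= /root /p !hornerE xq subrr eqxx /=.
  apply/allP=> _ /mapP[a _ ->]; rewrite /root !hornerE.
  have ->: (a%:A : L) ^+ q = a%:A by rewrite -(rmorphXn (in_alg L)) /= expf_card.
  by rewrite subrr.
have r2 : uniq rs.
  rewrite /= map_inj_uniq ?enum_uniq ?andbT; last exact: (fmorph_inj (in_alg L)).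
  apply/mapP=> -[a _ xa]; move/existsP: nx; apply; exists a; exact/eqP.
have := max_poly_roots p0 r1 r2.
by rewrite sp /= size_map -cardE ltnn.
Qed.

Definition ratv N (v : 'rV[L]_N) := frob_vec v == v.

Lemma frobE N (v : 'rV[L]_N) i : frob_vec v ord0 i = v ord0 i ^+ q.
Proof. by rewrite mxE. Qed.

Lemma exp0q : (0 : L) ^+ q = 0.
Proof. by rewrite expr0n; have := q_gt1; case: (q). Qed.

Lemma nz_entry N (v : 'rV[L]_N) : v != 0 -> exists i, v ord0 i != 0.
Proof.
move=> v0; case: (boolP [exists i, v ord0 i != 0]) => [/existsP[i Hi]|H]; first by exists i.
case/eqP: v0; apply/matrixP=> a b; rewrite ord1 mxE.
by apply/eqP; apply: contraNT H => Hb; apply/existsP; exists b.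
Qed.

Lemma exists_rat N (A : {vspace 'rV[L]_N}) : galois_closed A -> A != 0%VS ->
  exists i : 'I_N, exists2 w, w \in A & ratv w /\ w ord0 i = 1.
Proof.
move=> gA A0.
have [v vA v0] : exists2 v, v \in A & v != 0.
  by exists (vpick A); [exact: memv_pick | rewrite vpick0].
suff: forall s v, v \in A -> v != 0 -> leq #|[set j | v ord0 j != 0]| s ->
  exists i : 'I_N, exists2 w, w \in A & ratv w /\ w ord0 i = 1 by move/(_ _ v vA v0 (leqnn _)).
elim=> [|s IH] {v vA v0} v vA v0 hs.
  have [i Hi] := nz_entry v0.
  by move: hs; rewrite leqn0 => /eqP/cards0_eq/setP/(_ i); rewrite inE Hi inE.
have [i Hi] := nz_entry v0.
set v' := (v ord0 i)^-1 *: v.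
have v'i : v' ord0 i = 1 by rewrite mxE mulVf.
have v'A : v' \in A by rewrite memvZ.
set w := frob_vec v' - v'.
have wA : w \in A by rewrite memvB // gA.
case: (eqVneq w 0) => [w0|w0].
  exists i; exists v' => //; split => //; rewrite /ratv; apply/eqP; exact/subr0_eq.
apply: (IH w wA w0).
rewrite -ltnS; apply: leq_trans hs; apply: proper_card.
apply/properP; split.
  apply/subsetP=> j; rewrite !inE; apply: contraNN => /eqP vj.
  by rewrite !mxE vj mulr0 exp0q subrr.
exists i; rewrite !inE ?Hi //; move: v'i; rewrite !mxE => ->; by rewrite expr1n subrr eqxx.
Qed.

Lemma dim11 : \dim {: 'M[L]_(1,1)} = 1%N.
Proof. by rewrite dimvf /dim /=. Qed.

Lemma rat_basis N d (A : {vspace 'rV[L]_N}) : galois_closed A -> \dim A = d ->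
  exists s : seq 'rV[L]_N, [/\ all (@ratv N) s, <<s>>%VS = A & size s = d].
Proof.
elim: d A => [|d IH] A gA dA.
  exists [::]; split => //; rewrite span_nil; apply/esym/eqP; by rewrite -dimv_eq0 dA.
have A0 : A != 0%VS by rewrite -dimv_eq0 dA.
have [i [w wA [rw wi]]] := exists_rat gA A0.
pose f := linfun (@col L 1 N i).
pose A' := (A :&: lker f)%VS.
have memA' x : (x \in A') = (x \in A) && (x ord0 i == 0).
  rewrite memv_cap memv_ker lfunE /=; congr (_ && _).
  apply/eqP/eqP => [/matrixP/(_ ord0 ord0)|x0]; first by rewrite !mxE.
  by apply/matrixP=> a b; rewrite !ord1 !mxE x0.
have gA' : galois_closed A'.
  move=> x; rewrite !memA' => /andP[xA /eqP x0].
  by rewrite gA // mxE x0 exp0q eqxx.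
have dA' : \dim A' = d.
  have := limg_ker_dim f A; rewrite dA.
  suff -> : \dim (f @: A) = 1%N by rewrite addn1 => -[].
  apply/eqP; rewrite eqn_leq; apply/andP; split.
    by rewrite -[X in (_ <= X)%N]dim11 dimvS // subvf.
  rewrite lt0n dimv_eq0; apply/negP => /eqP fA0.
  have := memv_img f wA; rewrite fA0 memv0 lfunE /= => /eqP/matrixP/(_ ord0 ord0).
  by rewrite !mxE wi => /eqP; rewrite oner_eq0.
have [s' [rs' ss' zs']] := IH A' gA' dA'.
exists (w :: s'); split; rewrite /= ?rw ?zs' //.
rewrite span_cons ss'; apply/eqP; rewrite eqEsubv; apply/andP; split.
  rewrite subv_add; apply/andP; split; first by rewrite -memvE.
  exact: capvSl.
apply/subvP => x xA.
have -> : x = (x ord0 i) *: w + (x - (x ord0 i) *: w) by rewrite addrC subrK.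
apply: memv_add; first by rewrite memvZ // memv_line.
by rewrite memA' memvB ?memvZ //= !mxE wi mulr1 subrr.
Qed.

Lemma rw_span N (s : seq 'rV[L]_N) x : all (@ratv N) s -> x \in <<s>>%VS ->
  (rank_weight x <= size s)%N.
Proof.
move=> rs xs.
have xE := coord_span (X := in_tuple s) xs.
pose c := [seq coord (in_tuple s) t x | t <- enum 'I_(size s)].
rewrite /rank_weight.
apply: (leq_trans (dimvS (V := <<c>>%VS) _)).
  apply/span_subvP => _ /mapP[i _ ->].
  rewrite xE summxE.
  apply: memv_suml => t _.
  rewrite mxE.
  have st : s`_t \in s by rewrite mem_nth.
  have /eqP/matrixP/(_ ord0 i) := allP rs _ st.
  rewrite mxE => /fixK[a ->].
  rewrite mulr_algr memvZ // memv_span //.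
  by apply/mapP; exists t; rewrite ?mem_enum.
by apply: leq_trans (dim_span _) _; rewrite size_map size_enum_ord.
Qed.

Lemma KL N (B D : {vspace 'rV[L]_N}) : galois_closed B -> (D <= B)%VS ->
  (0 < \dim D)%N ->
  exists2 x, x \in D & x != 0 /\ (rank_weight x + \dim D <= \dim B + 1)%N.
Proof.
move=> gB DB D0.
have [s [rs sB zs]] := rat_basis gB (erefl _).
set j := \dim D; set b := \dim B.
have jb : (j <= b)%N by exact: dimvS.
set T := take j.-1 s; set Dr := drop j.-1 s.
set W := <<Dr>>%VS.
have hW : (b <= j.-1 + \dim W)%N.
  rewrite /b -sB -(cat_take_drop j.-1 s) span_cat -/T -/Dr -/W.
  have := dimv_sum_cap <<T>>%VS W.
  have : (\dim <<T>> <= j.-1)%N.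
    apply: leq_trans (dim_span _) _; by rewrite size_take; case: ifP => // /negbT; rewrite -leqNgt zs.
  move=> h1 h2; apply: leq_trans (leq_add h1 (leqnn (\dim W))); by rewrite -h2 leq_addr.
have WB : (W <= B)%VS.
  rewrite -sB /W; apply/span_subvP => y yD; apply: memv_span; exact: mem_drop yD.
have hDW : (0 < \dim (D :&: W))%N.
  have := dimv_sum_cap D W.
  have : (\dim (D + W) <= b)%N by apply: dimvS; rewrite subv_add DB WB.
  move: hW D0; rewrite -/j; move: (\dim W) (\dim (D + W)) (\dim (D :&: W)) => x y z; clear; lia.
exists (vpick (D :&: W)%VS).
  by have := memv_pick (D :&: W)%VS; rewrite memv_cap => /andP[].
split; first by rewrite vpick0 -dimv_eq0 -lt0n.
have : vpick (D :&: W)%VS \in W by have := memv_pick (D :&: W)%VS; rewrite memv_cap => /andP[].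
move/(rw_span _); move/(_ (introT allP (fun y yD => allP rs y (mem_drop yD)))); rewrite size_drop zs -/j; lia.
Qed.

Definition Esp N (P : pred 'I_N) : {vspace 'rV[L]_N} :=
  <<[seq delta_mx ord0 t | t <- [seq t <- enum 'I_N | P t]]>>%VS.

Lemma memE N (P : pred 'I_N) v :
  (v \in Esp P) = [forall j, ~~ P j ==> (v ord0 j == 0)].
Proof.
apply/idP/forallP => [vE j|H].
  apply/implyP => Pj.
  move: vE; rewrite /Esp; set X := (X in <<X>>%VS) => vE.
  have HX : forall y, y \in X -> y ord0 j = 0.
    move=> y /mapP[t']; rewrite mem_filter => /andP[Pt' _] ->.
    rewrite mxE; case: (eqVneq t' j) => [e|]; first by rewrite -e Pt' in Pj.
    by rewrite andbF.
  have vE' : v \in <<in_tuple X>>%VS by [].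
  rewrite (coord_span vE') summxE; apply/eqP; apply: big1 => t _.
  by rewrite mxE HX ?mulr0 // mem_nth.
rewrite [v]row_sum_delta; apply: memv_suml => j _.
case: (boolP (P j)) => Pj.
  by rewrite memvZ // memv_span //; apply: map_f; rewrite mem_filter Pj mem_enum.
by have /implyP/(_ Pj)/eqP-> := H j; rewrite scale0r mem0v.
Qed.

Lemma dimE N (P : pred 'I_N) : \dim (Esp P) = count P (enum 'I_N).
Proof.
have h1 : (\dim (Esp P) <= count P (enum 'I_N))%N.
  by apply: leq_trans (dim_span _) _; rewrite size_map size_filter.
have h2 : (\dim (Esp (predC P)) <= count (predC P) (enum 'I_N))%N.
  by apply: leq_trans (dim_span _) _; rewrite size_map size_filter.
have h3 : (N <= \dim (Esp P) + \dim (Esp (predC P)))%N.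
  have hs : ({: 'rV[L]_N} <= Esp P + Esp (predC P))%VS.
    apply/subvP => v _; rewrite [v]row_sum_delta (bigID P) /=.
    apply: memv_add; apply: memv_suml => j Pj; rewrite memvZ // memv_span //;
      by apply: map_f; rewrite mem_filter /= Pj mem_enum.
  have := dimvS hs; rewrite dimvf /dim /= mul1n => h.
  rewrite -dimv_sum_cap; exact: (leq_trans h (leq_addr _ _)).
have := count_predC P (enum 'I_N); rewrite size_enum_ord; lia.
Qed.

Lemma countlt N d : (d <= N)%N -> count (fun t : 'I_N => (t < d)%N) (enum 'I_N) = d.
Proof.
move=> dN; rewrite -size_filter.
rewrite -(size_map val).
have -> : [seq val i | i <- [seq t : 'I_N <- enum 'I_N | (t < d)%N]] =
  [seq x <- [seq val i | i <- enum 'I_N] | (x < d)%N] by rewrite filter_map.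
rewrite val_enum_ord.
by have := filter_iota_ltn 0 dN; rewrite add0n => ->; rewrite size_iota.
Qed.

Lemma gcE N (P : pred 'I_N) : galois_closed (Esp P).
Proof.
move=> v; rewrite !memE => /forallP H; apply/forallP => j; apply/implyP => Pj.
by have /implyP/(_ Pj)/eqP := H j; rewrite mxE => ->; rewrite exp0q.
Qed.

Section Dsum.
Variable n : nat.

Definition inl1 (u : 'rV[L]_n) : 'rV[L]_(n+n) := row_mx u 0.
Fact inl1_lin : linear inl1.
Proof. by move=> a u v; rewrite /inl1 scale_row_mx add_row_mx scaler0 addr0. Qed.
HB.instance Definition _ := GRing.isLinear.Build L _ _ _ inl1 inl1_lin.
Definition inr1 (u : 'rV[L]_n) : 'rV[L]_(n+n) := row_mx 0 u.
Fact inr1_lin : linear inr1.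
Proof. by move=> a u v; rewrite /inr1 scale_row_mx add_row_mx scaler0 addr0. Qed.
HB.instance Definition _ := GRing.isLinear.Build L _ _ _ inr1 inr1_lin.

Lemma inlE u : linfun (fun u : 'rV[L]_n => row_mx u (0 : 'rV[L]_n)) u = row_mx u 0.
Proof. exact: (lfunE inl1 u). Qed.
Lemma inrE u : linfun (fun u : 'rV[L]_n => row_mx (0 : 'rV[L]_n) u) u = row_mx 0 u.
Proof. exact: (lfunE inr1 u). Qed.

Lemma mem_dsum (C1 C2 : {vspace 'rV[L]_n}) x :
  (x \in code_dsum C1 C2) = (lsubmx x \in C1) && (rsubmx x \in C2).
Proof.
apply/idP/andP => [/memv_addP[a /memv_imgP[u uC ->] [b /memv_imgP[v vC ->] ->]]|[l r]].
  by rewrite inlE inrE add_row_mx addr0 add0r row_mxKl row_mxKr.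
rewrite -[x]hsubmxK; have -> : row_mx (lsubmx x) (rsubmx x) =
   row_mx (lsubmx x) 0 + row_mx 0 (rsubmx x) by rewrite add_row_mx addr0 add0r.
apply: memv_add.
  by rewrite -inlE memv_img.
by rewrite -inrE memv_img.
Qed.

Lemma dim_dsum (C1 C2 : {vspace 'rV[L]_n}) :
  \dim (code_dsum C1 C2) = (\dim C1 + \dim C2)%N.
Proof.
rewrite /code_dsum dimv_disjoint_sum; last first.
  apply/eqP; rewrite -subv0; apply/subvP => x; rewrite memv_cap memv0.
  case/andP => /memv_imgP[u _ ->] /memv_imgP[v _]; rewrite inlE inrE.
  by case/eq_row_mx => -> _; rewrite row_mx0.
rewrite !limg_dim_eq //.
  apply/eqP; rewrite -subv0; apply/subvP => x; rewrite memv_cap memv0 memv_ker inrE.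
  by case/andP => _ /eqP; rewrite -row_mx0 => /eq_row_mx[_ ->].
apply/eqP; rewrite -subv0; apply/subvP => x; rewrite memv_cap memv0 memv_ker inlE.
by case/andP => _ /eqP; rewrite -row_mx0 => /eq_row_mx[-> _].
Qed.

Lemma split0 (x : 'rV[L]_(n+n)) : lsubmx x = 0 -> rsubmx x = 0 -> x = 0.
Proof. by move=> l r; rewrite -[x]hsubmxK l r row_mx0. Qed.

Lemma frob0 N : frob_vec (0 : 'rV[L]_N) = 0.
Proof. by apply/matrixP => a b; rewrite !mxE exp0q. Qed.

Lemma lower_bound (C1 C2 : {vspace 'rV[L]_n}) (A : {vspace 'rV[L]_(n+n)}) :
  galois_closed A ->
  exists B1 B2 : {vspace 'rV[L]_n},
  [/\ galois_closed B1, galois_closed B2, \dim A = (\dim B1 + \dim B2)%N &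
     (\dim (A :&: code_dsum C1 C2) <= \dim (B1 :&: C1) + \dim (B2 :&: C2))%N].
Proof.
move=> gA.
pose p1 := linfun (@lsubmx L 1 n n). pose p2 := linfun (@rsubmx L 1 n n).
pose A0 := (A :&: lker p2)%VS.
pose B1 := (p1 @: A0)%VS. pose B2 := (p2 @: A)%VS.
have inj1 (U : {vspace 'rV[L]_(n+n)}) : (U <= lker p2)%VS -> \dim (p1 @: U) = \dim U.
  move=> Uk; apply: limg_dim_eq; apply/eqP; rewrite -subv0; apply/subvP => x.
  rewrite memv_cap memv0 memv_ker => /andP[xU]; rewrite lfunE /= => /eqP l.
  have := subvP Uk x xU; rewrite memv_ker lfunE /= => /eqP r.
  by rewrite (split0 l r).
set C := code_dsum C1 C2.
pose D := (A :&: C)%VS.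
exists B1, B2; split.
- move=> y /memv_imgP[x]; rewrite memv_cap memv_ker lfunE /= => /andP[xA /eqP r] ->.
  rewrite lfunE /=.
  have -> : frob_vec (lsubmx x) = p1 (frob_vec x).
    by rewrite lfunE /=; apply/matrixP => a c; rewrite !mxE.
  rewrite memv_img // memv_cap gA //= memv_ker lfunE /=.
  have -> : rsubmx (frob_vec x) = frob_vec (rsubmx x).
    by apply/matrixP => a c; rewrite !mxE.
  by rewrite r frob0.
- move=> y /memv_imgP[x xA ->]; rewrite lfunE /=.
  have -> : frob_vec (rsubmx x) = p2 (frob_vec x).
    by rewrite lfunE /=; apply/matrixP => a c; rewrite !mxE.
  by rewrite memv_img // gA.
- by rewrite -(limg_ker_dim p2 A) /B1 inj1 ?capvSr.
- rewrite -(limg_ker_dim p2 D) leq_add //; last first.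
    apply: dimvS; apply/subvP => y /memv_imgP[x xD ->].
    move: xD; rewrite memv_cap => /andP[xA]; rewrite mem_dsum => /andP[_ xC2].
    by rewrite memv_cap memv_img // lfunE.
  rewrite -inj1 ?capvSr //; apply: dimvS; apply/subvP => y /memv_imgP[x xD ->].
  move: xD; rewrite !memv_cap => /andP[/andP[xA]]; rewrite mem_dsum => /andP[xC1 _] xk.
  by rewrite memv_img ?lfunE //= memv_cap xA.
Qed.

End Dsum.

Lemma ML n k (B C : {vspace 'rV[L]_n}) : galois_closed B ->
  (forall c, c \in C -> c != 0 -> (n - k + 1 <= rank_weight c)%N) ->
  (0 < \dim (B :&: C))%N -> (\dim (B :&: C) + (n - k) <= \dim B)%N.
Proof.
move=> gB hC D0.
have [x xD [x0 hx]] := KL gB (capvSl B C) D0.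
have := hC x (subvP (capvSr B C) x xD) x0.
move: hx; move: (rank_weight x) (\dim (B :&: C)) (\dim B) => r g b; lia.
Qed.

Lemma dim_inl n (C1 : {vspace 'rV[L]_n}) :
  \dim (linfun (fun u : 'rV[L]_n => row_mx u (0 : 'rV[L]_n)) @: C1)%VS = \dim C1.
Proof.
rewrite limg_dim_eq //.
apply/eqP; rewrite -subv0; apply/subvP => x; rewrite memv_cap memv0 memv_ker inlE.
by case/andP => _ /eqP; rewrite -row_mx0 => /eq_row_mx[-> _].
Qed.

Lemma main_lemma (n k m : nat) (C1 C2 : {vspace 'rV[L]_n}) :
  (0 < n)%N -> (0 < k)%N -> (0 < m)%N -> \dim {:L} = m ->
  is_MRD m n k (n - k + 1) C1 -> is_MRD m n k (n - k + 1) C2 ->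
  \dim (code_dsum C1 C2) = (2 * k)%N /\
  (forall i, (1 <= i <= 2 * k)%N ->
     is_gen_rank_weight (code_dsum C1 C2) i
       (if (i <= k)%N then (n - k + i)%N else (2 * n - 2 * k + i)%N)).
Proof.
move=> _ _ _ _ [[d1 [_ md1]] _] [[d2 [_ md2]] _].
have kn : (k <= n)%N.
  by rewrite -d1 -[X in (_ <= X)%N](_ : \dim {: 'rV[L]_n} = n) ?dimvS ?subvf // dimvf /dim /= mul1n.
have dC : \dim (code_dsum C1 C2) = (2 * k)%N by rewrite dim_dsum d1 d2 mul2n addnn.
split => // i /andP[i1 i2].
set C := code_dsum C1 C2.
set d := if (i <= k)%N then _ else _.
have dle : (d <= n + n)%N by rewrite /d; case: ifP; lia.
split.
  exists (Esp (fun t : 'I_(n+n) => (t < d)%N)); split.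
  - exact: gcE.
  - rewrite /d; case: ifPn => ik.
    + pose S := Esp (fun t : 'I_(n+n) => (t < n)%N).
      pose U := (linfun (fun u : 'rV[L]_n => row_mx u (0 : 'rV[L]_n)) @: C1)%VS.
      have US : (U <= S)%VS.
        apply/subvP => _ /memv_imgP[u _ ->]; rewrite inlE memE.
        apply/forallP => j; apply/implyP; rewrite mxE; case: splitP => [j1 e | j2 e].
          by [].
        by rewrite mxE.
      have AS : (Esp (fun t : 'I_(n+n) => (t < d)%N) <= S)%VS.
        apply/subvP => v; rewrite !memE => /forallP H; apply/forallP => j.
        apply/implyP => jn; apply: (implyP (H j)).
        by move: jn; rewrite /d ik -!leqNgt; lia.
      have UC : (U <= C)%VS by exact: addvSl.
      have dS : \dim S = n by rewrite dimE countlt // leq_addr.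
      have dA : \dim (Esp (fun t : 'I_(n+n) => (t < d)%N)) = d by rewrite dimE countlt.
      apply: leq_trans (dimvS (capvS (subvv _) UC)).
      have := dimv_sum_cap (Esp (fun t : 'I_(n+n) => (t < d)%N)) U.
      have := dimvS (_ : (Esp (fun t : 'I_(n+n) => (t < d)%N) + U <= S)%VS).
      rewrite subv_add AS US dS dA dim_inl d1 /d ik => /(_ isT).
      move: (\dim (_ + U)) (\dim (_ :&: U)) => x y; lia.
    + have dA : \dim (Esp (fun t : 'I_(n+n) => (t < d)%N)) = d by rewrite dimE countlt.
      have := dimv_sum_cap (Esp (fun t : 'I_(n+n) => (t < d)%N)) C.
      have : (\dim (Esp (fun t : 'I_(n+n) => (t < d)%N) + C) <= n + n)%N.
        by rewrite -[X in (_ <= X)%N](_ : \dim {: 'rV[L]_(n+n)} = (n+n)%N) ?dimvS ?subvf // dimvf /dim /= mul1n.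
      rewrite dA dC /d (negbTE ik).
      move: (\dim (_ + C)) (\dim (_ :&: C)) => x y; lia.
  - by rewrite dimE countlt.
move=> A gA hi.
have [B1 [B2 [g1 g2 hb hj]]] := lower_bound C1 C2 gA.
have e1 : (\dim (B1 :&: C1) <= k)%N by rewrite -d1 dimvS ?capvSr.
have e2 : (\dim (B2 :&: C2) <= k)%N by rewrite -d2 dimvS ?capvSr.
have m1 := ML g1 md1. have m2 := ML g2 md2.
move: hi hj hb e1 e2 m1 m2; rewrite /d.
move: (\dim (A :&: C)) (\dim A) (\dim (B1 :&: C1)) (\dim (B2 :&: C2)) (\dim B1) (\dim B2)
  => j b x1 x2 y1 y2 hi hj hb e1 e2 m1 m2.
case: (posnP x1) => [z1|p1]; case: (posnP x2) => [z2|p2].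
- lia.
- have := m2 p2; case: ifP; lia.
- have := m1 p1; case: ifP; lia.
- have := m1 p1; have := m2 p2; case: ifP; lia.
Qed.
End S.

Theorem proposition4p10 (K : finFieldType) (L : fieldExtType K) (n k m : nat)
  (C1 C2 : {vspace 'rV[L]_n}) :
  (0 < n)%N -> (0 < k)%N -> (0 < m)%N -> \dim {:L} = m ->
  is_MRD m n k (n - k + 1) C1 -> is_MRD m n k (n - k + 1) C2 ->
  \dim (code_dsum C1 C2) = (2 * k)%N /\
  (forall i, (1 <= i <= 2 * k)%N ->
     is_gen_rank_weight (code_dsum C1 C2) i
       (if (i <= k)%N then (n - k + i)%N else (2 * n - 2 * k + i)%N)).
Proof. exact: main_lemma. Qed.
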